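(* Let $A,B$ be abstract state spaces and let $\omega\in A\otimes_{\max}B$ be a state that is steering for its $B$-marginal $\omega^B$, where $\omega^B$ lies in the interior of $B_+$ (so that $\mathrm{Face}(\omega^B)=B_+$). If $\hat\omega:A^*\to B$ is injective, then $\hat\omega$ is an order-isomorphism. If moreover $B$ (and therefore $A$) is irreducible, then $\omega$ is pure in $A\otimes_{\max}B$, i.e., lies on an extremal ray of the positive cone of $A\otimes_{\max}B$.
   Context: An abstract state space is a pair $(A,u_A)$ where $A$ is a finite-dimensional real vector space with a closed, pointed, generating convex cone $A_+$, and $u_A$ is an interior point of the dual cone $A^*_+$. An observable on $A$ is a finite family of effects $a_i\in A^*_+$ with $\sum_i a_i=u_A$. $A\otimes_{\max}B$ is the space of bilinear forms on $A^*\times B^*$ nonnegative on $A^*_+\times B^*_+$; a state is such a form with $\omega(u_A,u_B)=1$; $\hat\omega:A^*\to B$ is $\hat\omega(a)(b)=\omega(a,b)$ and $\omega^B=\hat\omega(u_A)$. An ensemble for $\beta\in B_+$ is a finite family $\beta_i\in B_+$ with $\sum_i\beta_i=\beta$; $\omega$ is steering for its $B$-marginal if every ensemble $\{\beta_i\}$ for $\omega^B$ equals $\{\hat\omega(x_i)\}$ for some observable $\{x_i\}$ on $A$. $\mathrm{Face}(\beta)$ is the smallest face of $B_+$ containing $\beta$. An order-isomorphism is a linear bijection $\phi$ with $\phi(x)\ge0$ iff $x\ge0$. An ordered linear space is irreducible if it is not an ordered direct sum of two nonzero ordered subspaces. *)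

(* Defs.v *)
(* Coordinates: a finite-dimensional real ordered space A is modelled as
   'rV[R]_n with positive cone KA : set 'rV_n; its dual A^* is modelled as
   'rV[R]_n via the standard pairing  pair f x = \sum_i f_i x_i. *)
From mathcomp Require Import all_boot all_order all_algebra.
From mathcomp Require Import all_classical all_reals all_analysis.
Import numFieldNormedType.Exports.
Set Implicit Arguments. Unset Strict Implicit. Unset Printing Implicit Defensive.
Import Order.TTheory GRing.Theory Num.Theory.
Local Open Scope classical_set_scope.
Local Open Scope ring_scope.

Definition pair (R : realType) (n : nat) (f x : 'rV[R]_n) : R :=
  \sum_(i < n) f 0 i * x 0 i.

Definition convex_cone (R : realType) (n : nat) (K : set 'rV[R]_n) : Prop :=
  K 0 /\ (forall x y, K x -> K y -> K (x + y)) /\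
  (forall (c : R) x, 0 <= c -> K x -> K (c *: x)).

Definition pointed (R : realType) (n : nat) (K : set 'rV[R]_n) : Prop :=
  forall x, K x -> K (- x) -> x = 0.

Definition generating (R : realType) (n : nat) (K : set 'rV[R]_n) : Prop :=
  forall x, exists p q, K p /\ K q /\ x = p - q.

Definition dual_cone (R : realType) (n : nat) (K : set 'rV[R]_n) : set 'rV[R]_n :=
  [set f | forall x, K x -> 0 <= pair f x].

Definition state_space (R : realType) (n : nat) (K : set 'rV[R]_n) (u : 'rV[R]_n) : Prop :=
  [/\ convex_cone K, closed K, pointed K, generating K & (dual_cone K)° u].

Definition observable (R : realType) (n : nat) (K : set 'rV[R]_n) (u : 'rV[R]_n)
  (k : nat) (a : 'I_k -> 'rV[R]_n) : Prop :=
  (forall i, dual_cone K (a i)) /\ \sum_(i < k) a i = u.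

(* A (x) B ~ n x m matrices W;  omega(f, g) = f W g^T  for f in A^*, g in B^*. *)
Definition omega (R : realType) (n m : nat) (W : 'M[R]_(n, m))
  (f : 'rV[R]_n) (g : 'rV[R]_m) : R := pair g (f *m W).

Definition omega_hat (R : realType) (n m : nat) (W : 'M[R]_(n, m))
  (f : 'rV[R]_n) : 'rV[R]_m := f *m W.

Definition max_tensor_cone (R : realType) (n m : nat)
  (KA : set 'rV[R]_n) (KB : set 'rV[R]_m) : set 'M[R]_(n, m) :=
  [set W | forall f g, dual_cone KA f -> dual_cone KB g -> 0 <= omega W f g].

Definition is_state (R : realType) (n m : nat)
  (KA : set 'rV[R]_n) (uA : 'rV[R]_n) (KB : set 'rV[R]_m) (uB : 'rV[R]_m)
  (W : 'M[R]_(n, m)) : Prop :=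
  max_tensor_cone KA KB W /\ omega W uA uB = 1.

Definition marginalB (R : realType) (n m : nat) (W : 'M[R]_(n, m)) (uA : 'rV[R]_n) :=
  omega_hat W uA.

Definition ensemble (R : realType) (m : nat) (KB : set 'rV[R]_m) (beta : 'rV[R]_m)
  (k : nat) (b : 'I_k -> 'rV[R]_m) : Prop :=
  (forall i, KB (b i)) /\ \sum_(i < k) b i = beta.

Definition steering (R : realType) (n m : nat)
  (KA : set 'rV[R]_n) (uA : 'rV[R]_n) (KB : set 'rV[R]_m) (W : 'M[R]_(n, m)) : Prop :=
  forall (k : nat) (b : 'I_k -> 'rV[R]_m), ensemble KB (marginalB W uA) b ->
    exists x : 'I_k -> 'rV[R]_n, observable KA uA x /\ forall i, omega_hat W (x i) = b i.

Definition order_iso (R : realType) (n m : nat) (KV : set 'rV[R]_n) (KU : set 'rV[R]_m)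
  (phi : 'rV[R]_n -> 'rV[R]_m) : Prop :=
  linear phi /\ bijective phi /\ forall x, KU (phi x) <-> KV x.

Definition subspace (R : realType) (n : nat) (U : set 'rV[R]_n) : Prop :=
  U 0 /\ (forall x y, U x -> U y -> U (x + y)) /\ (forall (c : R) x, U x -> U (c *: x)).

Definition ordered_direct_sum (R : realType) (n : nat) (K : set 'rV[R]_n)
  (U1 U2 : set 'rV[R]_n) : Prop :=
  [/\ subspace U1, subspace U2,
      (forall x, U1 x -> U2 x -> x = 0),
      (forall x, exists x1 x2, U1 x1 /\ U2 x2 /\ x = x1 + x2) &
      (forall x, K x <-> exists x1 x2, U1 x1 /\ K x1 /\ U2 x2 /\ K x2 /\ x = x1 + x2)].

Definition irreducible (R : realType) (n : nat) (K : set 'rV[R]_n) : Prop :=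
  ~ exists U1 U2 : set 'rV[R]_n,
      ordered_direct_sum K U1 U2 /\ (exists x, U1 x /\ x <> 0) /\ (exists y, U2 y /\ y <> 0).

Definition extremal_ray (R : realType) (n m : nat) (C : set 'M[R]_(n, m)) (W : 'M[R]_(n, m)) : Prop :=
  C W /\ W <> 0 /\
  forall W1 W2, C W1 -> C W2 -> W = W1 + W2 -> exists c : R, 0 <= c /\ W1 = c *: W.

(* Main.v *)
Require Import Defs.
From mathcomp Require Import all_boot all_order all_algebra.
From mathcomp Require Import all_classical all_reals all_analysis.
From mathcomp Require Import ring lra.
Import numFieldNormedType.Exports.
Import Order.TTheory GRing.Theory Num.Theory.
Local Open Scope classical_set_scope.
Local Open Scope ring_scope.
Set Implicit Arguments. Unset Strict Implicit. Unset Printing Implicit Defensive.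

Lemma interior_ball (R : realType) m (A : set 'rV[R]_m) x :
  A° x -> exists2 e : R, 0 < e & forall y, `|y| < e -> A (x + y).
Proof.
move=> /nbhs_ballP [e e0 He]; exists e => // y Hy; apply: He.
by rewrite -ball_normE /= opprD addrA subrr add0r normrN.
Qed.

Lemma pairDl (R : realType) m (f g x : 'rV[R]_m) : pair (f + g) x = pair f x + pair g x.
Proof. by rewrite /pair -big_split; apply: eq_bigr => i _; rewrite mxE mulrDl. Qed.
Lemma pairDr (R : realType) m (f x y : 'rV[R]_m) : pair f (x + y) = pair f x + pair f y.
Proof. by rewrite /pair -big_split; apply: eq_bigr => i _; rewrite mxE mulrDr. Qed.
Lemma pairZl (R : realType) m (a : R) (f x : 'rV[R]_m) : pair (a *: f) x = a * pair f x.
Proof. by rewrite /pair mulr_sumr; apply: eq_bigr => i _; rewrite mxE mulrA. Qed.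
Lemma pairZr (R : realType) m (a : R) (f x : 'rV[R]_m) : pair f (a *: x) = a * pair f x.
Proof. by rewrite /pair mulr_sumr; apply: eq_bigr => i _; rewrite mxE mulrCA. Qed.
Lemma pairC (R : realType) m (f x : 'rV[R]_m) : pair f x = pair x f.
Proof. by rewrite /pair; apply: eq_bigr => i _; rewrite mulrC. Qed.
Lemma pairNl (R : realType) m (f x : 'rV[R]_m) : pair (- f) x = - pair f x.
Proof. by rewrite -scaleN1r pairZl mulN1r. Qed.
Lemma pairNr (R : realType) m (f x : 'rV[R]_m) : pair f (- x) = - pair f x.
Proof. by rewrite -scaleN1r pairZr mulN1r. Qed.
Lemma pairBl (R : realType) m (f g x : 'rV[R]_m) : pair (f - g) x = pair f x - pair g x.
Proof. by rewrite pairDl pairNl. Qed.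
Lemma pairBr (R : realType) m (f x y : 'rV[R]_m) : pair f (x - y) = pair f x - pair f y.
Proof. by rewrite pairDr pairNr. Qed.
Lemma pair0l (R : realType) m (x : 'rV[R]_m) : pair 0 x = 0.
Proof. by rewrite /pair big1 // => i _; rewrite mxE mul0r. Qed.
Lemma pair0r (R : realType) m (x : 'rV[R]_m) : pair x 0 = 0.
Proof. by rewrite /pair big1 // => i _; rewrite mxE mulr0. Qed.
Lemma pair_delta (R : realType) m (i : 'I_m) (x : 'rV[R]_m) :
  pair (delta_mx 0 i) x = x 0 i.
Proof.
rewrite /pair (bigD1 i) //= big1 ?addr0; first by rewrite mxE !eqxx mul1r.
by move=> j /negbTE ji; rewrite mxE ji andbF mul0r.
Qed.
Lemma pair_sq_ge0 (R : realType) m (x : 'rV[R]_m) : 0 <= pair x x.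
Proof. by rewrite /pair sumr_ge0 // => i _; rewrite -expr2 sqr_ge0. Qed.
Lemma pair_sq_eq0 (R : realType) m (x : 'rV[R]_m) : pair x x = 0 -> x = 0.
Proof.
move=> /eqP; rewrite /pair psumr_eq0; last by move=> i _; rewrite -expr2 sqr_ge0.
move=> /allP H; apply/rowP => i; rewrite mxE; apply/eqP.
by have := H i (mem_index_enum i); rewrite /= mulf_eq0 orbb.
Qed.

Lemma norm_delta_le1 (R : realType) m (i : 'I_m) : `|delta_mx 0 i : 'rV[R]_m| <= 1.
Proof.
rewrite [leLHS]/Num.norm /= mx_normrE; apply: bigmax_le => // ij _; rewrite mxE.
by case: (_ && _); rewrite ?normr1 ?normr0.
Qed.

Lemma dual_int_bound (R : realType) m (K : set 'rV[R]_m) u :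
  (dual_cone K)° u -> exists2 c : R, 0 < c & forall x, K x -> forall i, c * `|x 0 i| <= pair u x.
Proof.
move=> /interior_ball [e e0 He]; exists (e / 2); first by rewrite divr_gt0.
move=> x Kx i.
pose g : 'rV[R]_m := (- (e / 2 * Num.sg (x 0 i))) *: delta_mx 0 i.
have Hg : `|g| < e.
  rewrite mx_normZ normrN normrM normr_sg.
  apply: (@le_lt_trans _ _ (e / 2)); last by rewrite ltr_pdivrMr // ltr_pMr // ltr1n.
  rewrite (ger0_norm (ltW (divr_gt0 e0 (ltr0n _ 2)))).
  rewrite -(mulrA (e / 2)); apply: ler_piMr; first by rewrite ltW // divr_gt0.
  case: (_ != 0); rewrite ?mul1r ?mul0r ?norm_delta_le1 //.
have := He g Hg x Kx; rewrite pairDl /g pairZl pair_delta.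
by rewrite mulNr -(mulrA (e / 2)) -normrEsg subr_ge0.
Qed.
Lemma line_max (R : realType) m (K : set 'rV[R]_m) x d (B : R) :
  closed K -> K x -> (forall t, 0 <= t -> K (x + t *: d) -> t <= B) ->
  exists t, [/\ 0 <= t, K (x + t *: d) & forall s, 0 <= s -> K (x + s *: d) -> s <= t].
Proof.
move=> cK Kx HB.
pose S := [set t : R | 0 <= t] `&` ((fun t : R => x + t *: d) @^-1` K).
have cf : continuous (fun t : R => x + t *: d).
  move=> t; apply: (@continuousD _ _ _ (cst x) (fun t : R => t *: d)).
    exact: cst_continuous.
  by apply: continuousZr_tmp.
have cS : closed S.
  apply: closedI; first exact: closed_ge.
  by apply: (proj1 (continuous_closedP _) cf).
have B0 : 0 <= B by apply: HB; rewrite ?scale0r ?addr0.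
have kS : compact S.
  apply: (subclosed_compact cS (@segment_compact _ 0 B)).
  move=> t [/= t0 Kt]; rewrite /= in_itv /= t0 /=; exact: HB.
have S0 : S !=set0 by exists 0; split => //=; rewrite scale0r addr0.
have [c cS' Hc] := compact_EVT_max S0 kS (continuous_subspaceT (fun t => cvg_id)).
move: cS'; rewrite inE => -[c0 Kc]; exists c; split => // s s0 Ks.
by apply: Hc; rewrite inE.
Qed.
Definition qd (R : realType) m (z p : 'rV[R]_m) := pair (z - p) (z - p).

Lemma cont_sum (R : realType) m (r : seq 'I_m) (F : 'I_m -> 'rV[R]_m -> R) :
  (forall i, continuous (F i)) -> continuous (fun p => \sum_(i <- r) F i p).
Proof.
elim: r => [|i r IH] HF.
  under eq_fun do rewrite big_nil; exact: cst_continuous.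
under eq_fun do rewrite big_cons.
move=> p; apply: (@continuousD _ _ _ (F i) (fun p => \sum_(j <- r) F j p)).
  exact: HF.
exact: IH.
Qed.

Lemma qd_cont (R : realType) m (z : 'rV[R]_m) : continuous (qd z).
Proof.
have -> : qd z = fun p => \sum_(i <- index_enum 'I_m) (z 0 i - p 0 i) * (z 0 i - p 0 i).
  by apply: funext => p; rewrite /qd /pair; apply: eq_bigr => i _; rewrite !mxE.
apply: cont_sum => i.
have c1 : continuous (fun p : 'rV[R]_m => z 0 i - p 0 i).
  move=> p; apply: continuousB; [exact: cst_continuous| exact: coord_continuous].
move=> p; exact: (continuousM (c1 p) (c1 p)).
Qed.

Lemma abs_le_sq (R : realType) (w : R) : `|w| <= 1 + w * w.
Proof. by case: (lerP 0 w) => h; [rewrite ger0_norm | rewrite ltr0_norm]; nra. Qed.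

Lemma term_le_pair (R : realType) m (w : 'rV[R]_m) i : w 0 i * w 0 i <= pair w w.
Proof.
rewrite /pair (bigD1 i) //= lerDl; apply: sumr_ge0 => j _; by rewrite -expr2 sqr_ge0.
Qed.

Lemma nearest (R : realType) m (K : set 'rV[R]_m) z :
  closed K -> K 0 -> exists2 p, K p & forall k, K k -> qd z p <= qd z k.
Proof.
move=> cK K0.
pose A := K `&` [set p | qd z p <= qd z 0].
have cA : closed A.
  apply: closedI => //.
  have := proj1 (continuous_closedP _) (@qd_cont _ _ z) [set x | x <= qd z 0] (@closed_le _ (qd z 0)); exact.
have bA : bounded_set A.
  exists (2 + 2 * pair z z); split; first by rewrite num_real.
  move=> M HM p [Kp Hp].
  rewrite /= [leLHS]/Num.norm /= mx_normrE; apply: bigmax_le.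
    by apply: le_trans (ltW HM); rewrite addr_ge0 // mulr_ge0 // pair_sq_ge0.
  move=> [i j] _ /=; rewrite (ord1 i); apply: (le_trans _ (ltW HM)).
  have e1 : p 0 j = z 0 j - (z - p) 0 j by rewrite !mxE opprB addrC subrK.
  rewrite e1 (le_trans (ler_normB _ _)) //.
  have h1 := abs_le_sq (z 0 j); have h2 := abs_le_sq ((z - p) 0 j).
  have h3 := term_le_pair z j; have h4 := term_le_pair (z - p) j.
  move: Hp; rewrite /= /qd subr0 => Hp.
  rewrite /qd in h4.
  set a := `|z 0 j| in h1 *; set b := `|(z - p) 0 j| in h2 *.
  set c := z 0 j * z 0 j in h1 h3; set d := (z - p) 0 j * (z - p) 0 j in h2 h4.
  set P := pair z z in h3 Hp *; set Q := pair (z - p) (z - p) in h4 Hp.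
  lra.
have kA : compact A by apply: bounded_closed_compact.
have A0 : A !=set0 by exists 0; split => //=.
have [p pA Hp] := EVT_min_rV A0 kA (continuous_subspaceT (@qd_cont _ _ z)).
move: pA; rewrite inE => -[Kp Hp0]; exists p => // k Kk.
have [kq|kq] := lerP (qd z k) (qd z 0).
  by apply: Hp; rewrite inE.
exact: le_trans Hp0 (ltW kq).
Qed.
Lemma real_lem (R : realType) (a b : R) :
  0 <= b -> (forall t, 0 < t -> t <= 1 -> 0 <= 2 * t * a + t ^+ 2 * b) -> 0 <= a.
Proof.
move=> b0 H; rewrite leNgt; apply/negP => a0.
have d0 : 0 < b + 1 - a by lra.
pose t := - a / (b + 1 - a).
have ht : t * (b + 1 - a) = - a by rewrite /t mulrVK // unitfE gt_eqF.
have t0 : 0 < t by rewrite /t divr_gt0 // oppr_gt0.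
have t1 : t <= 1 by rewrite /t ler_pdivrMr // mul1r; lra.
have := H t t0 t1; rewrite expr2; nra.
Qed.

Lemma pair_sq_expand (R : realType) m (a b : 'rV[R]_m) (c : R) :
  pair (a + c *: b) (a + c *: b) = pair a a + 2 * c * pair a b + c ^+ 2 * pair b b.
Proof. rewrite pairDl !pairDr !pairZl !pairZr (pairC b a); ring. Qed.

Lemma qd_expand (R : realType) m (z p k : 'rV[R]_m) (t : R) :
  qd z (p + t *: k) = qd z p - 2 * t * pair (z - p) k + t ^+ 2 * pair k k.
Proof.
rewrite /qd.
have -> : z - (p + t *: k) = (z - p) + (- t) *: k by rewrite scaleNr opprD addrA.
rewrite pair_sq_expand; ring.
Qed.

Lemma bipolar (R : realType) m (K : set 'rV[R]_m) z :
  convex_cone K -> closed K -> (forall g, dual_cone K g -> 0 <= pair g z) -> K z.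
Proof.
move=> [K0 [KD KZ]] cK Hz.
have [p Kp Hp] := nearest z cK K0.
have Hg : dual_cone K (p - z).
  move=> k Kk; apply: (@real_lem _ _ (pair k k)); first exact: pair_sq_ge0.
  move=> t t0 t1; have := Hp _ (KD _ _ Kp (KZ t _ (ltW t0) Kk)).
  have -> : pair (p - z) k = - pair (z - p) k by rewrite -pairNl opprB.
  rewrite qd_expand; lra.
have Hp2 : pair (p - z) p <= 0.
  rewrite -oppr_ge0 -pairNl opprB.
  apply: (@real_lem _ _ (pair p p)); first exact: pair_sq_ge0.
  move=> t t0 t1.
  have Kt : K (p + (- t) *: p).
    have -> : p + (- t) *: p = (1 - t) *: p by rewrite scalerBl scale1r scaleNr.
    by apply: KZ => //; rewrite subr_ge0.
  have := Hp _ Kt; rewrite qd_expand; lra.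
have := Hz _ Hg.
have -> : pair (p - z) z = pair (p - z) p - qd z p.
  have e : pair (z - p) (z - p) = pair (p - z) (p - z).
    by rewrite -opprB pairNl pairNr opprK.
  by rewrite /qd e -pairBr; congr pair; rewrite opprB addrC subrK.
move=> H; have q0 : qd z p = 0.
  apply/eqP; rewrite eq_le; apply/andP; split; first lra.
  exact: pair_sq_ge0.
have := pair_sq_eq0 q0; move/eqP; rewrite subr_eq0 => /eqP ->; exact: Kp.
Qed.

Lemma dualZ (R : realType) m (K : set 'rV[R]_m) (a : R) f :
  0 <= a -> dual_cone K f -> dual_cone K (a *: f).
Proof. by move=> a0 Hf x Kx; rewrite pairZl mulr_ge0 // Hf. Qed.

Lemma nonzero_coord (R : realType) m (x : 'rV[R]_m) : x != 0 -> exists i, x 0 i != 0.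
Proof.
move=> x0; case: (pselect (exists i, x 0 i != 0)) => // H; exfalso.
move/eqP: x0; apply; apply/rowP => i; rewrite mxE; apply/eqP/negP => Hi.
by apply: H; exists i; apply/negP.
Qed.

Lemma dual_int_pos (R : realType) m (K : set 'rV[R]_m) u x :
  (dual_cone K)° u -> K x -> x != 0 -> 0 < pair u x.
Proof.
move=> /dual_int_bound [c c0 Hc] Kx /nonzero_coord [i xi].
apply: lt_le_trans (Hc _ Kx i); by rewrite mulr_gt0 // normr_gt0.
Qed.

Lemma steer_pre (R : realType) (n m : nat)
  (KA : set 'rV[R]_n) (uA : 'rV[R]_n) (KB : set 'rV[R]_m) (W : 'M[R]_(n, m)) beta :
  convex_cone KB -> steering KA uA KB W -> KB° (marginalB W uA) -> KB beta ->
  exists t : R, 0 < t /\ exists f, dual_cone KA f /\ omega_hat W f = t *: beta.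
Proof.
move=> [_ [_ KZ]] Hst /interior_ball [e e0 He] Kb.
pose t := e / (2 * (`|beta| + 1)).
have n1 : 0 < `|beta| + 1 by rewrite ltr_wpDl.
have t0 : 0 < t by rewrite divr_gt0 // mulr_gt0.
have Ht : `|- (t *: beta)| < e.
  rewrite normrN normrZ gtr0_norm // /t.
  rewrite -mulrA (mulrC _ `|beta|) -[ltRHS]mulr1 ltr_pM2l //.
  rewrite ltr_pdivrMr ?mulr_gt0 // mul1r; nra.
pose b : 'I_2 -> 'rV[R]_m := fun i => if i == ord0 then t *: beta else marginalB W uA - t *: beta.
have Hb : ensemble KB (marginalB W uA) b.
  split.
    move=> i; rewrite /b; case: (i == ord0).
      by apply: KZ => //; exact: ltW.
    by have := He _ Ht.
  by rewrite big_ord_recl big_ord1 /b /= addrC subrK.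
have [x [[Hx _] Hxb]] := Hst 2 b Hb.
exists t; split; first by [].
exists (x ord0); split; first exact: Hx.
by rewrite Hxb /b eqxx.
Qed.

Lemma pre_exact (R : realType) (n m : nat)
  (KA : set 'rV[R]_n) (uA : 'rV[R]_n) (KB : set 'rV[R]_m) (W : 'M[R]_(n, m)) beta :
  convex_cone KB -> steering KA uA KB W -> KB° (marginalB W uA) -> KB beta ->
  exists f, dual_cone KA f /\ omega_hat W f = beta.
Proof.
move=> cB Hst Hint Kb.
have [t [t0 [f [Hf Hfb]]]] := steer_pre cB Hst Hint Kb.
exists (t^-1 *: f); split; first by apply: dualZ => //; rewrite invr_ge0 ltW.
by rewrite /omega_hat -scalemxAl -/(omega_hat W f) Hfb scalerA mulVf ?scale1r // gt_eqF.
Qed.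

Lemma part1 (R : realType) (n m : nat)
  (KA : set 'rV[R]_n) (uA : 'rV[R]_n) (KB : set 'rV[R]_m) (uB : 'rV[R]_m)
  (W : 'M[R]_(n, m)) :
  state_space KB uB ->
  is_state KA uA KB uB W ->
  steering KA uA KB W ->
  KB° (marginalB W uA) ->
  injective (omega_hat W) ->
  order_iso (dual_cone KA) KB (omega_hat W).
Proof.
move=> [cB clB pB gB iB] [HW _] Hst Hint Hinj.
split; first by move=> a u v; rewrite /omega_hat mulmxDl scalemxAl.
have surj : forall beta, exists f, omega_hat W f = beta.
  move=> beta; have [p [q [Kp [Kq ->]]]] := gB beta.
  have [f1 [_ <-]] := pre_exact cB Hst Hint Kp.
  have [f2 [_ <-]] := pre_exact cB Hst Hint Kq.
  by exists (f1 - f2); rewrite /omega_hat mulmxBl.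
split.
  have [g Hg] := choice surj.
  exists g => [f|beta]; last exact: Hg.
  by apply: Hinj; rewrite Hg.
move=> f; split.
  move=> Kf; have [f' [Hf' Hff']] := pre_exact cB Hst Hint Kf.
  by rewrite -(Hinj _ _ Hff').
move=> Hf; apply: bipolar => // g Hg.
exact: HW f g Hf Hg.
Qed.

Definition Iset (R : realType) m (K : set 'rV[R]_m) (x : 'rV[R]_m) : set 'rV[R]_m :=
  [set y | exists s : R, 0 <= s /\ K (s *: x - y) /\ K (s *: x + y)].

Definition rkle (R : realType) m (K : set 'rV[R]_m) (k : nat) (x : 'rV[R]_m) :=
  forall r (M : 'M[R]_(r, m)), (forall i, Iset K x (row i M)) -> (\rank M <= k)%N.

Definition Dec (R : realType) m (K : set 'rV[R]_m) (psi : 'rV[R]_m -> 'rV[R]_m) x :=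
  exists s : seq (R * 'rV[R]_m),
    (forall p, p \in s -> K p.2 /\ psi p.2 = p.1 *: p.2) /\ x = \sum_(p <- s) p.2.

Definition linfun (R : realType) m (psi : 'rV[R]_m -> 'rV[R]_m) :=
  forall (a : R) x y, psi (a *: x + y) = a *: psi x + psi y.

Lemma lin0 (R : realType) m (psi : 'rV[R]_m -> 'rV[R]_m) : linfun psi -> psi 0 = 0.
Proof.
move=> H; have E := H 1 0 0; rewrite !scale1r addr0 in E.
have : psi 0 + psi 0 - psi 0 = psi 0 - psi 0 by rewrite -E.
by rewrite addrK subrr.
Qed.
Lemma linD (R : realType) m (psi : 'rV[R]_m -> 'rV[R]_m) : linfun psi ->
  forall x y, psi (x + y) = psi x + psi y.
Proof. by move=> H x y; have := H 1 x y; rewrite !scale1r. Qed.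
Lemma linZ (R : realType) m (psi : 'rV[R]_m -> 'rV[R]_m) : linfun psi ->
  forall a x, psi (a *: x) = a *: psi x.
Proof. by move=> H a x; rewrite -[a *: x]addr0 H lin0 // addr0. Qed.
Lemma linN (R : realType) m (psi : 'rV[R]_m -> 'rV[R]_m) : linfun psi ->
  forall x, psi (- x) = - psi x.
Proof. by move=> H x; rewrite -scaleN1r linZ // scaleN1r. Qed.
Lemma linB (R : realType) m (psi : 'rV[R]_m -> 'rV[R]_m) : linfun psi ->
  forall x y, psi (x - y) = psi x - psi y.
Proof. by move=> H x y; rewrite linD // linN. Qed.
Lemma lin_sum (R : realType) m (psi : 'rV[R]_m -> 'rV[R]_m) (T : Type) (s : seq T) F :
  linfun psi -> psi (\sum_(p <- s) F p) = \sum_(p <- s) psi (F p).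
Proof.
move=> H; elim: s => [|p s IH]; first by rewrite !big_nil lin0.
by rewrite !big_cons linD // IH.
Qed.

Lemma cone_sum (R : realType) m (K : set 'rV[R]_m) (T : eqType) (s : seq T) F :
  convex_cone K -> (forall p, p \in s -> K (F p)) -> K (\sum_(p <- s) F p).
Proof.
move=> [K0 [KD _]]; elim: s => [|p s IH] H; first by rewrite big_nil.
rewrite big_cons; apply: KD; first by apply: H; rewrite inE eqxx.
by apply: IH => q qs; apply: H; rewrite inE qs orbT.
Qed.

Lemma Iset_sub (R : realType) m (K : set 'rV[R]_m) x :
  convex_cone K -> Defs.subspace (Iset K x).
Proof.
move=> [K0 [KD KZ]]; split; first by rewrite /Iset /=; exists 0; rewrite scale0r subr0 addr0.
split.
  move=> y1 y2 [s1 [s10 [H1 H2]]] [s2 [s20 [H3 H4]]]; rewrite /Iset /=; exists (s1 + s2).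
  split; first exact: addr_ge0.
  split.
    by have := KD _ _ H1 H3; rewrite scalerDl opprD addrACA.
  by have := KD _ _ H2 H4; rewrite scalerDl addrACA.
move=> c y [s [s0 [H1 H2]]]; rewrite /Iset /=; exists (`|c| * s); split; first by rewrite mulr_ge0.
have [c0|c0] := lerP 0 c.
  rewrite ger0_norm // -scalerA -scalerBr -scalerDr.
  by split; apply: KZ.
rewrite ltr0_norm //.
have -> : (- c * s) *: x - c *: y = (- c) *: (s *: x + y) by rewrite scalerDr scalerA scaleNr.
have -> : (- c * s) *: x + c *: y = (- c) *: (s *: x - y).
  by rewrite scalerBr scalerA scaleNr opprK.
by split; apply: KZ => //; rewrite oppr_ge0 ltW.
Qed.

Lemma Iset_incl (R : realType) m (K : set 'rV[R]_m) x z (sg : R) :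
  convex_cone K -> 0 <= sg -> K (sg *: x - z) -> Iset K z `<=` Iset K x.
Proof.
move=> [K0 [KD KZ]] sg0 Hz y [s [s0 [H1 H2]]]; rewrite /Iset /=; exists (s * sg); split; first exact: mulr_ge0.
have E : forall v, (s * sg) *: x + v = s *: (sg *: x - z) + (s *: z + v).
  by move=> v; rewrite scalerBr addrA subrK scalerA.
by split; rewrite E; apply: KD => //; apply: KZ.
Qed.

Lemma Iset_self (R : realType) m (K : set 'rV[R]_m) x :
  convex_cone K -> K x -> Iset K x x.
Proof.
move=> [K0 [KD KZ]] Kx; rewrite /Iset /=; exists 1; split => //; rewrite scale1r subrr; split => //.
exact: KD.
Qed.

Lemma Iset_sum (R : realType) m (K : set 'rV[R]_m) x r (F : 'I_r -> 'rV[R]_m) :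
  convex_cone K -> (forall i, Iset K x (F i)) -> Iset K x (\sum_i F i).
Proof.
move=> cK H; have [S0 [SD _]] := Iset_sub x cK.
by elim/big_ind: _ => // i _; apply: H.
Qed.

Lemma rank_col_lt (R : realType) m r (M : 'M[R]_(r, m)) (d : 'rV[R]_m) :
  ~~ (d <= M)%MS -> (\rank M < \rank (col_mx M d))%N.
Proof.
move=> Hd; have H : (M <= col_mx M d)%MS by rewrite -addsmxE addsmxSl.
by rewrite (ltn_leqif (mxrank_leqif_sup H)) -addsmxE addsmx_sub submx_refl.
Qed.

Lemma rows_col (R : realType) m r (P : 'rV[R]_m -> Prop) (M : 'M[R]_(r, m)) d :
  (forall i, P (row i M)) -> P d -> forall i, P (row i (col_mx M d)).
Proof.
move=> HM Hd i; rewrite -(fintype.splitK i); case: (fintype.split i) => j /=.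
  by rewrite rowKu.
by rewrite rowKd row_id.
Qed.

Lemma rkle0 (R : realType) m (K : set 'rV[R]_m) x :
  convex_cone K -> K x -> rkle K 0 x -> x = 0.
Proof.
move=> cK Kx H; apply/eqP; rewrite -mxrank_eq0 -leqn0; apply: (H 1 x) => i.
rewrite row_id; exact: Iset_self.
Qed.

Lemma escape (R : realType) m (K : set 'rV[R]_m) z d :
  convex_cone K -> pointed K -> Iset K z d -> d != 0 ->
  exists2 eps : R, 0 < eps & K (z + eps *: d) /\ K (z - eps *: d).
Proof.
move=> [K0 [KD KZ]] pK [s [s0 [H1 H2]]] d0.
have [s00|sp] := eqVneq s 0.
  move: H1 H2; rewrite s00 scale0r !add0r => H1 H2.
  by move: d0; rewrite (pK _ H2) ?eqxx // opprK.
have spos : 0 < s by rewrite lt_def sp s0.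
exists s^-1; first by rewrite invr_gt0.
have E : forall v, z + s^-1 *: v = s^-1 *: (s *: z + v).
  by move=> v; rewrite scalerDr scalerA mulVf // scale1r.
split; first by rewrite E; apply: KZ => //; rewrite invr_ge0 ltW.
by rewrite -scalerN E; apply: KZ => //; rewrite invr_ge0 ltW.
Qed.

Lemma rk_step (R : realType) m (K : set 'rV[R]_m) x e t k :
  convex_cone K -> pointed K -> 0 <= t -> e != 0 -> Iset K x e ->
  (forall s, 0 <= s -> K (x + s *: e) -> s <= t) -> K (x + t *: e) ->
  rkle K k.+1 x -> rkle K k (x + t *: e).
Proof.
move=> cK pK t0 e0 Ie Hmax Kt Hk r M HM.
have cK' := cK; move: cK' => [K0 [KD KZ]].
have [s [s0 [He1 He2]]] := Ie.
have Hsub : Iset K (x + t *: e) `<=` Iset K x.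
  apply: (@Iset_incl _ _ K x _ (1 + t * s) cK); first by rewrite addr_ge0 // mulr_ge0.
  have -> : (1 + t * s) *: x - (x + t *: e) = t *: (s *: x - e).
    by apply/rowP => i; rewrite !mxE; ring.
  exact: KZ.
have Hk1 : (\rank M <= k.+1)%N by apply: Hk => i; apply: Hsub.
rewrite leqNgt; apply/negP => Hgt.
have Hr : \rank M = k.+1 by apply/eqP; rewrite eqn_leq Hk1 Hgt.
case Hdm: (e <= M)%MS.
  have Ie1 : Iset K (x + t *: e) e.
    move/submxP: Hdm => [D HD].
    have : Iset K (x + t *: e) (D *m M).
      rewrite mulmx_sum_row; apply: Iset_sum => // i.
      have [_ [_ SZ]] := Iset_sub (x + t *: e) cK.
      by apply: SZ; apply: HM.
    by rewrite -HD.
  have [eps eps0 [Ke _]] := escape cK pK Ie1 e0.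
  have : t + eps <= t.
    apply: Hmax; first by rewrite addr_ge0 // ltW.
    by rewrite scalerDl addrA.
  by rewrite gerDl leNgt eps0.
have := rank_col_lt (negbT Hdm); rewrite Hr => Hlt.
have : (\rank (col_mx M e) <= k.+1)%N.
  apply: Hk; apply: rows_col => // i; exact: Hsub.
by rewrite leqNgt Hlt.
Qed.

Lemma Dec_add (R : realType) m (K : set 'rV[R]_m) psi x y :
  Dec K psi x -> Dec K psi y -> Dec K psi (x + y).
Proof.
move=> [s1 [H1 ->]] [s2 [H2 ->]]; exists (s1 ++ s2); split; last by rewrite big_cat.
by move=> p; rewrite mem_cat => /orP [] ?; [apply: H1 | apply: H2].
Qed.

Lemma Dec_scale (R : realType) m (K : set 'rV[R]_m) psi x (a : R) :
  convex_cone K -> linfun psi -> 0 <= a -> Dec K psi x -> Dec K psi (a *: x).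
Proof.
move=> [_ [_ KZ]] Hl a0 [s [H ->]].
exists (map (fun p => (p.1, a *: p.2)) s); split.
  move=> q /mapP [p ps ->] /=; have [Kp Ep] := H p ps; split; first exact: KZ.
  by rewrite linZ // Ep !scalerA mulrC.
by rewrite big_map scaler_sumr.
Qed.

Lemma line_bound (R : realType) m (K : set 'rV[R]_m) u x d :
  (dual_cone K)° u -> d != 0 -> pair u d = 0 ->
  exists B, forall t, 0 <= t -> K (x + t *: d) -> t <= B.
Proof.
move=> /dual_int_bound [c c0 Hc] /nonzero_coord [i di] ud.
exists ((pair u x / c + `|x 0 i|) / `|d 0 i|) => t t0 Kt.
have dpos : 0 < `|d 0 i| by rewrite normr_gt0.
rewrite ler_pdivlMr //.
have := Hc _ Kt i; rewrite pairDr pairZr ud mulr0 addr0 mxE [X in x 0 i + X]mxE => H.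
have H2 : `|x 0 i + t * d 0 i| <= pair u x / c by rewrite ler_pdivlMr // mulrC.
have E : x 0 i + t * d 0 i - x 0 i = t * d 0 i by rewrite addrAC subrr add0r.
have := ler_normB (x 0 i + t * d 0 i) (x 0 i); rewrite E normrM (ger0_norm t0).
lra.
Qed.

Lemma dec_all (R : realType) m (K : set 'rV[R]_m) u psi :
  convex_cone K -> closed K -> pointed K -> (dual_cone K)° u -> linfun psi ->
  (forall x, K x -> K (psi x) /\ K (x - psi x)) ->
  forall x, K x -> Dec K psi x.
Proof.
move=> cK clK pK iu Hl Hpos.
have cK' := cK; move: cK' => [K0 [KD KZ]].
suff H : forall k x, K x -> rkle K k x -> Dec K psi x.
  by move=> x Kx; apply: (H m) => // r M _; exact: rank_leq_col.
elim=> [|k IH] x Kx Hk.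
  rewrite (rkle0 cK Kx Hk); exists [::]; split => //; by rewrite big_nil.
case: (pselect (exists c, psi x = c *: x)) => [[c Hc]|Hne].
  exists [:: (c, x)]; split; last by rewrite big_seq1.
  by move=> p; rewrite inE => /eqP -> /=.
have x0 : x != 0.
  apply/negP => /eqP x0; apply: Hne; exists 0; by rewrite x0 lin0 // scale0r.
have [Ky Kxy] := Hpos x Kx.
have ux : 0 < pair u x := dual_int_pos iu Kx x0.
pose c := pair u (psi x) / pair u x.
pose d := psi x - c *: x.
have d0 : d != 0.
  apply/negP => /eqP d0; apply: Hne; exists c; apply/eqP; rewrite -subr_eq0; exact/eqP.
have ud : pair u d = 0.
  by rewrite /d pairBr pairZr /c mulrVK ?subrr // unitfE gt_eqF.
pose s := 1 + `|c|.
have Id : Iset K x d.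
  exists s; split; first by rewrite addr_ge0 // normr_ge0.
  split.
    have -> : s *: x - d = (x - psi x) + (`|c| + c) *: x.
      by rewrite /s /d; apply/rowP => i; rewrite !mxE; ring.
    apply: KD => //; apply: KZ => //.
    by case: (lerP 0 c) => h; [rewrite ger0_norm // addr_ge0 | rewrite ltr0_norm // addNr].
  have -> : s *: x + d = psi x + (1 + `|c| - c) *: x.
    by rewrite /s /d; apply/rowP => i; rewrite !mxE; ring.
  apply: KD => //; apply: KZ => //.
  by case: (lerP 0 c) => h; [rewrite ger0_norm // addrK | rewrite ltr0_norm //; lra].
have Imd : Iset K x (- d).
  by have [_ [_ SZ]] := Iset_sub x cK; rewrite -scaleN1r; apply: SZ.
have md0 : - d != 0 by rewrite oppr_eq0.
have umd : pair u (- d) = 0 by rewrite pairNr ud oppr0.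
have [B1 HB1] := line_bound x iu d0 ud.
have [B2 HB2] := line_bound x iu md0 umd.
have [t1 [t10 Kt1 Hm1]] := line_max clK Kx HB1.
have [t2 [t20 Kt2 Hm2]] := line_max clK Kx HB2.
have [eps eps0 [Ke1 Ke2]] := escape cK pK Id d0.
have t1p : 0 < t1.
  apply: (lt_le_trans eps0); apply: Hm1; [exact: (ltW eps0) | exact: Ke1].
have t2p : 0 < t2.
  apply: (lt_le_trans eps0); apply: Hm2; first exact: (ltW eps0).
  by rewrite scalerN.
have D1 := IH _ Kt1 (rk_step cK pK t10 d0 Id Hm1 Kt1 Hk).
have D2 := IH _ Kt2 (rk_step cK pK t20 md0 Imd Hm2 Kt2 Hk).
have T0 : t1 + t2 != 0 by rewrite gt_eqF // addr_gt0.
have -> : x = (t2 / (t1 + t2)) *: (x + t1 *: d) + (t1 / (t1 + t2)) *: (x + t2 *: - d).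
  apply/rowP => i; rewrite !mxE; field => //.
apply: Dec_add; apply: Dec_scale => //; rewrite divr_ge0 // ?addr_ge0 //; exact: ltW.
Qed.

Lemma indep (R : realType) m (psi : 'rV[R]_m -> 'rV[R]_m) (lam : R) :
  linfun psi -> forall (s : seq (R * 'rV[R]_m)) x, psi x = lam *: x ->
  (forall p, p \in s -> p.1 != lam /\ psi p.2 = p.1 *: p.2) ->
  x = \sum_(p <- s) p.2 -> x = 0.
Proof.
move=> Hl s; move Hn : (size s) => n; elim: n s Hn => [|n IH] [|p s] //= Hn x Hx Hs Hsum.
  by rewrite Hsum big_nil.
case: Hn => Hn.
have [Hp1 Hp2] := Hs p (mem_head _ _).
have Hs' : forall q, q \in s -> q.1 != lam /\ psi q.2 = q.1 *: q.2.
  by move=> q qs; apply: Hs; rewrite inE qs orbT.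
pose mu := p.1.
have : (lam - mu) *: x = 0.
  apply: (IH (map (fun q => (q.1, (q.1 - mu) *: q.2)) s)); first by rewrite size_map.
  - by rewrite linZ // Hx !scalerA mulrC.
  - move=> q /mapP [r rs ->] /=; have [Hr1 Hr2] := Hs' r rs; split => //.
    by rewrite linZ // Hr2 !scalerA mulrC.
  - rewrite big_map scalerBl -Hx Hsum big_cons linD // lin_sum // Hp2.
    rewrite scalerDr opprD addrACA /mu subrr add0r scaler_sumr -sumrB.
    apply: eq_big_seq => r rs; by rewrite (Hs' r rs).2 scalerBl.
move/eqP; rewrite scaler_eq0 subr_eq0 eq_sym (negbTE Hp1) /= => /eqP //.
Qed.

Lemma psi_on_list (R : realType) m (psi : 'rV[R]_m -> 'rV[R]_m) (lam : R) (s : seq (R * 'rV[R]_m)) :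
  linfun psi -> (forall p, p \in s -> psi p.2 = p.1 *: p.2 /\ (p.2 = 0 \/ p.1 = lam)) ->
  psi (\sum_(p <- s) p.2) = lam *: \sum_(p <- s) p.2.
Proof.
move=> Hl H; rewrite lin_sum // scaler_sumr; apply: eq_big_seq => p ps.
have [E [->|<-]] := H p ps; last exact: E.
by rewrite lin0 // scaler0.
Qed.

Lemma centre (R : realType) m (K : set 'rV[R]_m) u psi :
  convex_cone K -> closed K -> pointed K -> generating K -> (dual_cone K)° u -> linfun psi ->
  (forall x, K x -> K (psi x) /\ K (x - psi x)) -> irreducible K ->
  exists c : R, forall x, psi x = c *: x.
Proof.
move=> cK clK pK gK iu Hl Hpos Hirr.
have cK' := cK; move: cK' => [K0 [KD KZ]].
have Hdec := dec_all cK clK pK iu Hl Hpos.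
case: (pselect (exists (l1 l2 : R) (v1 v2 : 'rV[R]_m),
   [/\ K v1 /\ v1 != 0 /\ psi v1 = l1 *: v1, K v2 /\ v2 != 0 /\ psi v2 = l2 *: v2 & l1 != l2]))
  => [[l1 [l2 [v1 [v2 [[Kv1 [v10 Ev1]] [Kv2 [v20 Ev2]] l12]]]]] | HA].
  exfalso; apply: Hirr.
  pose U1 := [set x | psi x = l1 *: x].
  pose U2 := [set x | exists s : seq (R * 'rV[R]_m),
      (forall p, p \in s -> p.1 != l1 /\ psi p.2 = p.1 *: p.2) /\ x = \sum_(p <- s) p.2].
  have sU1 : Defs.subspace U1.
    split; first by rewrite /U1 /= lin0 // scaler0.
    split; first by move=> x y; rewrite /U1 /= linD // scalerDr => -> ->.
    by move=> c x; rewrite /U1 /= linZ // => ->; rewrite !scalerA mulrC.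
  have sU2 : Defs.subspace U2.
    split; first by exists [::]; rewrite big_nil.
    split.
      move=> x y [s1 [H1 ->]] [s2 [H2 ->]]; exists (s1 ++ s2); split; last by rewrite big_cat.
      by move=> p; rewrite mem_cat => /orP [] ?; [apply: H1 | apply: H2].
    move=> c x [s [H ->]]; exists (map (fun p => (p.1, c *: p.2)) s); split.
      move=> q /mapP [p ps ->] /=; have [Hp1 Hp2] := H p ps; split => //.
      by rewrite linZ // Hp2 !scalerA mulrC.
    by rewrite big_map scaler_sumr.
  have splitK : forall x, K x -> exists x1 x2, U1 x1 /\ K x1 /\ U2 x2 /\ K x2 /\ x = x1 + x2.
    move=> x Kx; have [s [Hs ->]] := Hdec x Kx.
    exists (\sum_(p <- seq.filter (fun p => p.1 == l1) s) p.2).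
    exists (\sum_(p <- seq.filter (fun p => p.1 != l1) s) p.2).
    split.
      rewrite /U1 /=; apply: psi_on_list => // p; rewrite mem_filter => /andP [/eqP pl ps].
      by split; [exact: (Hs p ps).2 | right].
    split.
      by apply: cone_sum => // p; rewrite mem_filter => /andP [_ ps]; exact: (Hs p ps).1.
    split.
      exists (seq.filter (fun p => p.1 != l1) s); split => // p; rewrite mem_filter => /andP [pl ps].
      by split => //; exact: (Hs p ps).2.
    split.
      by apply: cone_sum => // p; rewrite mem_filter => /andP [_ ps]; exact: (Hs p ps).1.
    by rewrite !big_filter [LHS](bigID (fun p => p.1 == l1)) /=.
  exists U1, U2; split.
    split => //.
    - move=> x Hx1 [s [Hs Hx]]; exact: (indep Hl Hx1 Hs Hx).
    - move=> x; have [p [q [Kp [Kq ->]]]] := gK x.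
      have [p1 [p2 [Up1 [_ [Up2 [_ ->]]]]]] := splitK p Kp.
      have [q1 [q2 [Uq1 [_ [Uq2 [_ ->]]]]]] := splitK q Kq.
      exists (p1 - q1), (p2 - q2); split; last split; last by rewrite opprD addrACA.
        have [_ [D1 Z1]] := sU1; apply: D1 => //; rewrite -scaleN1r; exact: Z1.
      have [_ [D2 Z2]] := sU2; apply: D2 => //; rewrite -scaleN1r; exact: Z2.
    - move=> x; split; first by move/splitK.
      by move=> [x1 [x2 [_ [K1 [_ [K2 ->]]]]]]; apply: KD.
  split.
    by exists v1; split => //; apply/eqP.
  exists v2; split; last exact/eqP.
  exists [:: (l2, v2)]; split; last by rewrite big_seq1.
  by move=> p; rewrite inE => /eqP -> /=; split => //; rewrite eq_sym.
case: (pselect (exists (l : R) (v : 'rV[R]_m), K v /\ v != 0 /\ psi v = l *: v))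
  => [[l [v [Kv [v0 Ev]]]] | HB].
  have HK : forall x, K x -> psi x = l *: x.
    move=> x Kx; have [s [Hs ->]] := Hdec x Kx; apply: psi_on_list => // p ps.
    have [Kp Ep] := Hs p ps; split => //.
    case: (eqVneq p.2 0) => [|p0]; first by left.
    right; case: (eqVneq p.1 l) => // pl; exfalso; apply: HA.
    by exists l, p.1, v, p.2; split; [| | rewrite eq_sym].
  exists l => x; have [p [q [Kp [Kq ->]]]] := gK x.
  by rewrite linB // !HK // scalerBr.
have HK : forall x, K x -> x = 0.
  move=> x Kx; have [s [Hs ->]] := Hdec x Kx; rewrite big_seq big1 // => p ps.
  have [Kp Ep] := Hs p ps; case: (eqVneq p.2 0) => [-> //| p0]; exfalso; apply: HB.
  by exists p.1, p.2.
exists 0 => x; have [p [q [Kp [Kq ->]]]] := gK x.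
by rewrite (HK p Kp) (HK q Kq) subrr lin0 // scale0r.
Qed.

Unset Implicit Arguments. Set Strict Implicit.

Theorem corollary5p5 (R : realType) (n m : nat)
  (KA : set 'rV[R]_n) (uA : 'rV[R]_n) (KB : set 'rV[R]_m) (uB : 'rV[R]_m)
  (W : 'M[R]_(n, m)) :
  state_space KA uA -> state_space KB uB ->
  is_state KA uA KB uB W ->
  steering KA uA KB W ->
  KB° (marginalB W uA) ->
  injective (omega_hat W) ->
  order_iso (dual_cone KA) KB (omega_hat W) /\
  (irreducible KB -> extremal_ray (max_tensor_cone KA KB) W).
Proof.
move=> hA hB hst Hst Hint Hinj.
have Hiso := part1 hB hst Hst Hint Hinj.
split => // Hirr.
have hB' := hB; move: hB' => [cB clB pB gB iB].
have cB' := cB; move: cB' => [K0 [KD KZ]].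
move: hst => [HW HW1].
move: Hiso => [_ [[g Hg1 Hg2] Hord]].
have Ky : KB (marginalB W uA) := interior_subset Hint.
have y0 : marginalB W uA != 0.
  apply/negP => /eqP y0; move: HW1; rewrite /omega -/(omega_hat W uA) -/(marginalB W uA) y0.
  by rewrite pair0r => /eqP; rewrite eq_sym oner_eq0.
split => //; split.
  by move=> W0; move/eqP: y0; apply; rewrite /marginalB /omega_hat W0 mulmx0.
move=> W1 W2 HW1' HW2' HWs.
have glin : forall (a : R) x y, g (a *: x + y) = a *: g x + g y.
  move=> a x y; apply: Hinj; rewrite Hg2 /omega_hat mulmxDl -scalemxAl.
  by rewrite -/(omega_hat W (g x)) -/(omega_hat W (g y)) !Hg2.
pose psi := fun y : 'rV[R]_m => g y *m W1.
have Hl : linfun psi by move=> a x y; rewrite /psi glin mulmxDl scalemxAl.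
have Hpos : forall y, KB y -> KB (psi y) /\ KB (y - psi y).
  move=> y Ky'.
  have Hgy : dual_cone KA (g y) by apply/(Hord (g y)); rewrite Hg2.
  split.
    apply: bipolar => // h Hh; exact: HW1' (g y) h Hgy Hh.
  have -> : y - psi y = g y *m W2.
    by rewrite /psi -{1}(Hg2 y) /omega_hat HWs mulmxDr addrC addKr.
  apply: bipolar => // h Hh; exact: HW2' (g y) h Hgy Hh.
have [c Hc] := centre cB clB pB gB iB Hl Hpos Hirr.
exists c; split.
  have := Hpos _ Ky; rewrite Hc => -[Kc _].
  rewrite leNgt; apply/negP => c0.
  have : KB (- marginalB W uA).
    have -> : - marginalB W uA = (- c^-1) *: (c *: marginalB W uA).
      by rewrite scalerA mulNr mulVf ?lt_eqF // scaleN1r.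
    by apply: KZ => //; rewrite oppr_ge0 invr_le0 ltW.
  by move/(pB _ Ky)/eqP; rewrite (negbTE y0).
apply/row_matrixP => i; rewrite !rowE -scalemxAr.
have := Hc ('e_i *m W); rewrite /psi -/(omega_hat W 'e_i) Hg1 => ->.
by [].
Qed.
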